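(* In the Boosted HiPPA setting of the context, let $\{x^k\}$ and $\{\bar x^k\}$ be generated by the algorithm and let $\bar y^k\in\operatorname{prox}^p_{\gamma\varphi}(x^k)$ satisfy $\|\bar x^k-\bar y^k\|=\operatorname{dist}(\bar x^k,\operatorname{prox}^p_{\gamma\varphi}(x^k))$. If $\sum_{k=0}^\infty\|R^{\varepsilon_k}_\gamma(x^k)\|<\infty$ and $\sum_{k=0}^\infty\|d^k\|<\infty$, then $\{x^k\}$, $\{\bar x^k\}$ and $\{\bar y^k\}$ converge to a common proximal fixed point $\hat x$, i.e., $\hat x\in\operatorname{prox}^p_{\gamma\varphi}(\hat x)$.
   Context: Standing setting. $p>1$; $\varphi:\mathbb{R}^n\to\mathbb{R}\cup\{+\infty\}$ is proper, lsc and bounded from below. For $\gamma>0$: $\operatorname{prox}^p_{\gamma\varphi}(x):=\operatorname{argmin}_y\big(\varphi(y)+\frac1{p\gamma}\|x-y\|^p\big)$, $\varphi^p_\gamma(x):=\inf_y\big(\varphi(y)+\frac1{p\gamma}\|x-y\|^p\big)$. $\{\varepsilon_k\},\{\delta_k\}$ are non-increasing positive sequences with $\sum_k\varepsilon_k<\infty$, $\delta_k\downarrow0$. Prox approximation: for each index $j$ and point $x$ needed, a point $P_j(x)$ (written $\operatorname{prox}^{p,\varepsilon_j}_{\gamma\varphi}(x)$) is available with $\operatorname{dist}(P_j(x),\operatorname{prox}^p_{\gamma\varphi}(x))<\delta_j$ and $\varphi(P_j(x))+\frac1{p\gamma}\|x-P_j(x)\|^p<\varphi^p_\gamma(x)+\varepsilon_j$.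 Define $\varphi^{p,\varepsilon_j}_\gamma(x):=\varphi(P_j(x))+\frac1{p\gamma}\|x-P_j(x)\|^p$, $R^{\varepsilon_j}_\gamma(x):=x-P_j(x)$. Boosted HiPPA: choose $x^0$, $\gamma>0$, $\sigma\in(0,\frac1{p\gamma})$, $\vartheta\in(0,1)$. At iteration $k$: $\bar x^k:=P_k(x^k)$; choose a direction $d^k$; for $m=0,1,\dots$ set $\alpha_k=\vartheta^m$, $\hat x^{k+1}=(1-\alpha_k)\bar x^k+\alpha_k(x^k+d^k)$, until $\varphi^{p,\varepsilon_{k+1}}_\gamma(\hat x^{k+1})\le\varphi^{p,\varepsilon_k}_\gamma(x^k)-\sigma\|R^{\varepsilon_k}_\gamma(x^k)\|^p+\varepsilon_k+\varepsilon_{k+1}$; set $x^{k+1}=\hat x^{k+1}$. *)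

(* Defs.v *)
From HB Require Import structures.
From mathcomp Require Import all_boot all_order all_algebra.
From mathcomp Require Import all_classical all_reals.
From mathcomp Require Import ereal exp.
Set Implicit Arguments. Unset Strict Implicit. Unset Printing Implicit Defensive.
Import Order.TTheory GRing.Theory Num.Theory.
Local Open Scope ring_scope.
Local Open Scope classical_set_scope.

Section Defs.
Context {R : realType} {n : nat}.
Notation vec := 'rV[R]_n.

Definition enorm (v : vec) : R := Num.sqrt (\sum_(i < n) (v ord0 i) ^+ 2).

Definition proper_fun (f : vec -> \bar R) : Prop :=
  (exists x, f x < +oo)%E /\ (forall x, f x != -oo%E).

Definition lsc (f : vec -> \bar R) : Prop :=
  forall (x : vec) (a : R), (a%:E < f x)%E ->
    exists2 delta : R, 0 < delta &
      forall y : vec, enorm (y - x) < delta -> (a%:E < f y)%E.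

Definition bounded_below (f : vec -> \bar R) : Prop :=
  exists m : R, forall x, (m%:E <= f x)%E.

Definition prox_obj (phi : vec -> \bar R) (p gamma : R) (x y : vec) : \bar R :=
  (phi y + ((powR (enorm (x - y)) p) / (p * gamma))%:E)%E.

Definition prox (phi : vec -> \bar R) (p gamma : R) (x : vec) : set vec :=
  [set y | forall z, (prox_obj phi p gamma x y <= prox_obj phi p gamma x z)%E].

Definition envelope (phi : vec -> \bar R) (p gamma : R) (x : vec) : \bar R :=
  ereal_inf [set prox_obj phi p gamma x y | y in [set: vec]].

(* distance from a point to a set (+oo for the empty set) *)
Definition dist (z : vec) (S : set vec) : \bar R :=
  ereal_inf [set (enorm (z - s))%:E | s in S].

(* sum_k a_k < oo for nonnegative a: bounded partial sums *)
Definition summable (a : nat -> R) : Prop :=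
  exists M : R, forall N, \sum_(k < N) a k <= M.

Definition converges_to (u : nat -> vec) (l : vec) : Prop :=
  forall eps : R, 0 < eps -> exists N, forall k, (N <= k)%N -> enorm (u k - l) < eps.

Definition nonincreasing_seq (u : nat -> R) : Prop := forall k, u k.+1 <= u k.

Definition tends_to_zero (u : nat -> R) : Prop :=
  forall eps : R, 0 < eps -> exists N, forall k, (N <= k)%N -> `|u k| < eps.

Definition env_approx (phi : vec -> \bar R) (p gamma : R)
  (P : nat -> vec -> vec) (j : nat) (x : vec) : \bar R :=
  prox_obj phi p gamma x (P j x).

Definition resid (P : nat -> vec -> vec) (j : nat) (x : vec) : vec := x - P j x.

End Defs.

(* Main.v *)
Require Import Defs.
From HB Require Import structures.
From mathcomp Require Import all_boot all_order all_algebra.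
From mathcomp Require Import all_classical all_reals.
From mathcomp Require Import ereal exp.
From mathcomp Require Import all_analysis.
From mathcomp Require Import lra ring.
Require Import Defs.
Import Order.TTheory GRing.Theory Num.Theory.
Import numFieldNormedType.Exports.
Local Open Scope ring_scope.
Local Open Scope classical_set_scope.

Section Helpers.
Context {R : realType}.

Lemma bridge (u : nat -> R) (l : R) :
  u k @[k --> \oo] --> l <-> forall e, 0 < e -> exists N, forall k, (N <= k)%N -> `|u k - l| < e.
Proof.
split.
  move=> /cvgrPdistC_lt H e e0; have [N _ HN] := H e e0.
  by exists N => k Nk; apply: HN.
move=> H; apply/cvgrPdistC_lt => e e0; have [N HN] := H e e0.
by exists N.
Qed.

Lemma cvg_sum_seq (I : eqType) (r : seq I) (F : I -> nat -> R) (L : I -> R) :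
  (forall i, F i k @[k --> \oo] --> L i) ->
  (\sum_(i <- r) F i k) @[k --> \oo] --> \sum_(i <- r) L i.
Proof.
move=> HF; elim: r => [|i r IH].
  rewrite big_nil; under eq_cvg do rewrite big_nil; exact: cvg_cst.
rewrite big_cons; under eq_cvg do rewrite big_cons.
exact: cvgD.
Qed.

Lemma cvg_of_incr (u c : nat -> R) (M : R) :
  (forall k, `|u k.+1 - u k| <= c k) -> (forall N, \sum_(k < N) c k <= M) ->
  cvgn u.
Proof.
move=> Hc HM.
have c0 : forall k, 0 <= c k by move=> k; exact: le_trans (Hc k).
pose S N := \sum_(k < N) c k.
have Sinc : forall k, S k <= S k.+1.
  by move=> k; rewrite /S big_ord_recr /= lerDl.
have cS : cvgn S.
  apply: nondecreasing_is_cvgn; first exact/nondecreasing_seqP.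
  by exists M => y [N _ <-]; exact: HM.
pose v k := u k + S k.
have uS : forall k, u k <= u 0%N + S k.
  elim=> [|k IH]; first by rewrite /S big_ord0 addr0.
  have := Hc k; rewrite ler_norml => /andP[_ h].
  rewrite /S big_ord_recr /= addrA; rewrite /S in IH; lra.
have cv : cvgn v.
  apply: nondecreasing_is_cvgn.
    apply/nondecreasing_seqP => k; rewrite /v /S big_ord_recr /=.
    by have := Hc k; rewrite ler_norml => /andP[h _]; lra.
  exists (u 0%N + M + M) => y [k _ <-]; rewrite /v.
  have := uS k; have := HM k; rewrite /S; lra.
have -> : u = (fun k => v k - S k) by apply/funext => k; rewrite /v addrK.
exact: is_cvgB.
Qed.

Lemma summable_to0 (a : nat -> R) (M : R) :
  (forall k, 0 <= a k) -> (forall N, \sum_(k < N) a k <= M) ->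
  a k @[k --> \oo] --> 0.
Proof.
move=> a0 HM; pose S N := \sum_(k < N) a k.
have cS : cvgn S.
  apply: nondecreasing_is_cvgn.
    by apply/nondecreasing_seqP => k; rewrite /S big_ord_recr /= lerDl.
  by exists M => y [N _ <-]; exact: HM.
have cS1 : S k.+1 @[k --> \oo] --> limn S by rewrite (cvg_shiftS S).
have -> : a = (fun k => S k.+1) - S.
  apply/funext => k; change (a k = S k.+1 - S k).
  rewrite /S big_ord_recr /=; lra.
rewrite -(subrr (limn S)); exact: cvgB.
Qed.

Lemma powR_cvg (b : nat -> R) (l p : R) : 1 <= p -> (forall k, 0 <= b k) ->
  b k @[k --> \oo] --> l -> powR (b k) p @[k --> \oo] --> powR l p.
Proof.
move=> p1 b0 bl.
have l0 : 0 <= l.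
  rewrite leNgt; apply/negP => ln0.
  have /bridge := bl => /(_ (- l)); rewrite oppr_gt0 => /(_ ln0) [N HN].
  have := HN N (leqnn N); have := b0 N; rewrite ltr_norml; lra.
have p0 : p != 0 by apply/negP => /eqP p0; move: p1; rewrite p0; lra.
have [El|lpos] := eqVneq l 0.
  subst l; rewrite powR0 //; apply/bridge => e e0.
  have /bridge := bl => /(_ _ e0) [N1 HN1].
  have /bridge := bl => /(_ _ ltr01) [N2 HN2].
  exists (maxn N1 N2) => k; rewrite geq_max => /andP[k1 k2].
  have := HN1 k k1; have := HN2 k k2; rewrite !subr0 (ger0_norm (b0 k)) => h2 h1.
  rewrite ger0_norm; last exact: powR_ge0.
  have [->|bk] := eqVneq (b k) 0; first by rewrite powR0.
  apply: le_lt_trans h1; apply: ge1r_powR => //.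
  by rewrite lt_neqAle eq_sym bk b0 ltW.
have lgt : 0 < l by rewrite lt_neqAle eq_sym lpos l0.
have e1 : expR (p * ln (b k)) @[k --> \oo] --> expR (p * ln l).
  apply: (continuous_cvg _ (@continuous_expR R _)).
  apply: cvgM; first exact: cvg_cst.
  exact: (continuous_cvg _ (continuous_ln lgt)).
apply/bridge => e e0.
have /bridge := e1 => /(_ e e0) [N1 HN1].
have /bridge := bl => /(_ l lgt) [N2 HN2].
exists (maxn N1 N2) => k; rewrite geq_max => /andP[k1 k2].
have bk : b k != 0.
  apply/eqP => bk0; have := HN2 k k2; rewrite bk0 sub0r normrN gtr0_norm //; lra.
by rewrite /powR (negPf bk) (negPf lpos); exact: HN1.
Qed.
End Helpers.

Section Vec.
Context {R : realType} {n : nat}.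
Notation vec := 'rV[R]_n.

Lemma enorm_ge0 (v : vec) : 0 <= enorm v.
Proof. exact: sqrtr_ge0. Qed.

Lemma coord_le (v : vec) i : `|v ord0 i| <= enorm v.
Proof.
rewrite /enorm -sqrtr_sqr; apply: ler_wsqrtr.
rewrite (bigD1 i) //= lerDl; apply: sumr_ge0 => j _; exact: sqr_ge0.
Qed.

Lemma enorm0 : enorm (0 : vec) = 0.
Proof.
rewrite /enorm big1 ?sqrtr0 // => i _; rewrite mxE; exact: expr0n.
Qed.

Lemma enorm_cvg (u : nat -> vec) (a : vec) :
  (forall i, u k ord0 i @[k --> \oo] --> a ord0 i) ->
  enorm (u k) @[k --> \oo] --> enorm a.
Proof.
move=> Hu; rewrite /enorm.
apply: (continuous_cvg _ (@sqrt_continuous R _)).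
apply: cvg_sum_seq => i; rewrite expr2.
under eq_cvg do rewrite expr2.
exact: cvgM.
Qed.

Lemma conv_of_coord (u : nat -> vec) (a : vec) :
  (forall i, u k ord0 i @[k --> \oo] --> a ord0 i) -> converges_to u a.
Proof.
move=> Hu e e0.
have : enorm (u k - a) @[k --> \oo] --> enorm (a - a).
  apply: enorm_cvg => i.
  have -> : (fun k => (u k - a) ord0 i) = (fun k => u k ord0 i - a ord0 i).
    by apply/funext => k; rewrite !mxE.
  rewrite !mxE; apply: cvgB => //; exact: cvg_cst.
rewrite subrr enorm0 => /bridge /(_ e e0) [N HN].
exists N => k Nk; have := HN k Nk; rewrite subr0 ger0_norm //; exact: enorm_ge0.
Qed.

Lemma coord_of_conv (u : nat -> vec) (a : vec) i :
  converges_to u a -> u k ord0 i @[k --> \oo] --> a ord0 i.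
Proof.
move=> H; apply/bridge => e e0; have [N HN] := H e e0.
exists N => k Nk; apply: le_lt_trans (HN k Nk).
by have := coord_le (u k - a) i; rewrite !mxE.
Qed.
End Vec.


Lemma squeeze0 {R : realType} (w v : nat -> R) :
  (forall k, `|w k| <= v k) -> v k @[k --> \oo] --> 0 -> w k @[k --> \oo] --> 0.
Proof.
move=> Hw /bridge Hv; apply/bridge => e e0; have [N HN] := Hv e e0.
exists N => k Nk; rewrite subr0; apply: le_lt_trans (Hw k) _.
by have := HN k Nk; rewrite subr0 => /(le_lt_trans (ler_norm _)).
Qed.

Theorem theorem11 (R : realType) (n : nat)
  (phi : 'rV[R]_n -> \bar R) (p gamma sigma vartheta : R)
  (eps delta : nat -> R) (P : nat -> 'rV[R]_n -> 'rV[R]_n)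
  (x xbar ybar d : nat -> 'rV[R]_n) :
  1 < p ->
  proper_fun phi -> lsc phi -> bounded_below phi ->
  0 < gamma -> 0 < sigma -> sigma < 1 / (p * gamma) ->
  0 < vartheta -> vartheta < 1 ->
  (forall k, 0 < eps k) -> Defs.nonincreasing_seq eps -> summable eps ->
  (forall k, 0 < delta k) -> Defs.nonincreasing_seq delta -> tends_to_zero delta ->
  (* the inexact prox oracle *)
  (forall j z, (dist (P j z) (prox phi p gamma z) < (delta j)%:E)%E) ->
  (forall j z, (env_approx phi p gamma P j z < envelope phi p gamma z + (eps j)%:E)%E) ->
  (* the iterates of Boosted HiPPA *)
  (forall k, xbar k = P k (x k)) ->
  (forall k, exists m : nat,
     let trial := fun m' : nat =>
       (1 - vartheta ^+ m') *: xbar k + vartheta ^+ m' *: (x k + d k) in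
     let accept := fun z : 'rV[R]_n =>
       (env_approx phi p gamma P k.+1 z <=
          env_approx phi p gamma P k (x k)
          - (sigma * powR (enorm (resid P k (x k))) p)%:E
          + (eps k)%:E + (eps k.+1)%:E)%E in
     accept (trial m) /\ (forall m', (m' < m)%N -> ~ accept (trial m')) /\
     x k.+1 = trial m) ->
  (* the auxiliary sequence ybar *)
  (forall k, ybar k \in prox phi p gamma (x k)) ->
  (forall k, (enorm (xbar k - ybar k))%:E = dist (xbar k) (prox phi p gamma (x k))) ->
  summable (fun k => enorm (resid P k (x k))) ->
  summable (fun k => enorm (d k)) ->
  exists xhat : 'rV[R]_n,
    converges_to x xhat /\ converges_to xbar xhat /\ converges_to ybar xhat /\
    xhat \in prox phi p gamma xhat.
Proof.
move=> p1 [prop1 prop2] Hlsc _ g0 _ _ th0 th1 _ _ _ _ _ Hdel Hdist _ Hxbar Hstep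
  Hyb Hdisteq [M1 HM1] [M2 HM2].
have p0 : 0 < p by lra.
pose ER k := enorm (resid P k (x k)).
pose ED k := enorm (d k).
have incr : forall k i, `|x k.+1 ord0 i - x k ord0 i| <= ER k + ED k.
  move=> k i; have [m [_ [_ ->]]] := Hstep k.
  rewrite !mxE.
  have a0 : 0 <= vartheta ^+ m by apply: exprn_ge0; lra.
  have a1 : vartheta ^+ m <= 1 by apply: exprn_ile1; lra.
  move: a0 a1; set al := vartheta ^+ m; clearbody al => a0 a1.
  have hr : `|x k ord0 i - xbar k ord0 i| <= ER k.
    by have := coord_le (resid P k (x k)) i; rewrite /resid !mxE Hxbar.
  have hd : `|d k ord0 i| <= ED k by exact: coord_le.
  have -> : (1 - al) * xbar k ord0 i + al * (x k ord0 i + d k ord0 i) - x k ord0 i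
    = (al - 1) * (x k ord0 i - xbar k ord0 i) + al * d k ord0 i by ring.
  apply: (le_trans (ler_normD _ _)); apply: lerD; rewrite normrM.
    have h1 : `|al - 1| <= 1 by rewrite ler0_norm; lra.
    rewrite -[ER k]mul1r; apply: ler_pM => //; exact: normr_ge0.
  have h1 : `|al| <= 1 by rewrite ger0_norm; lra.
  rewrite -[ED k]mul1r; apply: ler_pM => //; exact: normr_ge0.
have cx : forall i, cvgn (fun k => x k ord0 i).
  move=> i; apply: (@cvg_of_incr _ _ (fun k => ER k + ED k) (M1 + M2)) => //.
  move=> N; rewrite big_split /=; apply: lerD; [exact: HM1 | exact: HM2].
pose xhat : 'rV[R]_n := \row_i limn (fun k => x k ord0 i).
have hx : converges_to x xhat.
  by apply: conv_of_coord => i; rewrite mxE; exact: cx.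
have ER0 : ER k @[k --> \oo] --> 0.
  by apply: (@summable_to0 _ _ M1) => // k; exact: enorm_ge0.
have hxb : converges_to xbar xhat.
  apply: conv_of_coord => i.
  have -> : (fun k => xbar k ord0 i)
    = (fun k => x k ord0 i - (resid P k (x k)) ord0 i).
    by apply/funext => k; rewrite /resid Hxbar !mxE; ring.
  rewrite -[xhat ord0 i]subr0; apply: cvgB; first exact: coord_of_conv.
  by apply: (@squeeze0 _ _ ER _ ER0) => k; exact: coord_le.
have del0 : delta k @[k --> \oo] --> 0.
  apply/bridge => e e0; have [N HN] := Hdel e e0.
  by exists N => k Nk; rewrite subr0; exact: HN.
have hyb : converges_to ybar xhat.
  apply: conv_of_coord => i.
  have -> : (fun k => ybar k ord0 i)
    = (fun k => xbar k ord0 i - (xbar k - ybar k) ord0 i).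
    by apply/funext => k; rewrite !mxE; ring.
  rewrite -[xhat ord0 i]subr0; apply: cvgB; first exact: coord_of_conv.
  apply: (@squeeze0 _ _ delta _ del0) => k; apply: (le_trans (coord_le _ i)).
  have := Hdist k (x k); rewrite -Hxbar -Hdisteq lte_fin => /ltW; done.
exists xhat; split => //; split => //; split => //.
apply/mem_set => z; rewrite /prox_obj subrr enorm0 powR0 ?gt_eqF // mul0r adde0.
case Ez: (phi z) => [r| |]; last by have := prop2 z; rewrite Ez.
  2: by rewrite addye //; exact: leey.
set c := powR (enorm (xhat - z)) p / (p * gamma).
rewrite -EFinD leNgt; apply/negP => Hlt.
have [a [ha1 ha2]] : exists a, r + c < a /\ (a%:E < phi xhat)%E.
  move: Hlt; case Ex: (phi xhat) => [s| |] H.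
  - exists ((r + c + s) / 2); move: H; rewrite lte_fin => H; split; [lra | rewrite lte_fin; lra].
  - by exists (r + c + 1); split; [lra | exact: ltry].
  - by have := prop2 xhat; rewrite Ex.
have [dl dl0 Hdl] := Hlsc xhat a ha2.
have [N1 HN1] := hyb dl dl0.
pose g k := powR (enorm (x k - z)) p / (p * gamma).
have gc : g k @[k --> \oo] --> c.
  apply: cvgMl; apply: powR_cvg; first lra.
    by move=> k; exact: enorm_ge0.
  apply: enorm_cvg => i.
  have -> : (fun k => (x k - z) ord0 i) = (fun k => x k ord0 i - z ord0 i).
    by apply/funext => k; rewrite !mxE.
  rewrite !mxE; apply: cvgB; last exact: cvg_cst.
  by have := coord_of_conv _ _ i hx; rewrite mxE.
have /bridge := gc => /(_ (a - r - c)) [|N2 HN2]; first lra.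
pose k := maxn N1 N2.
have k1 : (N1 <= k)%N by rewrite leq_maxl.
have k2 : (N2 <= k)%N by rewrite leq_maxr.
have h1 := Hdl (ybar k) (HN1 k k1).
have := set_mem (Hyb k) z; rewrite /prox_obj Ez -EFinD => h2.
have h3 : (phi (ybar k) <= (r + g k)%:E)%E.
  apply: le_trans h2; apply: leeDl; rewrite lee_fin.
  apply: divr_ge0; first exact: powR_ge0.
  by apply: mulr_ge0; lra.
have := lt_le_trans h1 h3; rewrite lte_fin => h4.
have := HN2 k k2; rewrite ltr_norml; lra.
Qed.
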